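(* Let $q$ be a prime power, $e\in\{1,2\}$, $r$ an integer ($r$ even if $e=1$, $r$ odd if $e=2$), and let $\mathcal S$ be a spread of the non-degenerate quadric $\mathcal Q_{r+2,e}$ of ${\rm PG}(r+2,q)$. If $K$ is a hyperplane of ${\rm PG}(r+2,q)$ such that $K\cap\mathcal Q_{r+2,e}$ is a non-degenerate quadric $\mathcal Q_{r+1,e-1}$ (hyperbolic if $e=1$, parabolic if $e=2$), then at most $q+1$ members of $\mathcal S$ are contained in $K$.
   Context: Notation: $\mathcal Q_{m,e}$ denotes a non-degenerate quadric of ${\rm PG}(m,q)$ which is hyperbolic $\mathcal Q^+(m,q)$ if $e=0$ ($m$ odd), parabolic $\mathcal Q(m,q)$ if $e=1$ ($m$ even), elliptic $\mathcal Q^-(m,q)$ if $e=2$ ($m$ odd). A generator of $\mathcal Q_{m,e}$ is a projective subspace of maximal dimension contained in it; generators are $\frac{m-e-1}{2}$-dimensional. A spread of $\mathcal Q_{m,e}$ is a set of $q^{\frac{m+e-1}{2}}+1$ pairwise disjoint generators. *)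

(* Defs.v *)
From mathcomp Require Import all_boot all_order all_algebra.
Set Implicit Arguments. Unset Strict Implicit. Unset Printing Implicit Defensive.
Import GRing.Theory.
Local Open Scope ring_scope.

(* Vectors of F^n are row vectors 'rV[F]_n; projective subspaces of PG(n-1,q)
   are vector subspaces {vspace 'rV[F]_n}: a projective subspace of projective
   dimension d is a vector subspace of dimension d+1. *)

(* The quadratic form with Gram matrix A : Q(x) = x A x^T. Every quadratic form
   on F^n is of this shape. *)
Definition qform (F : fieldType) (n : nat) (A : 'M[F]_n) (x : 'rV[F]_n) : F :=
  (x *m A *m x^T) ord0 ord0.

Definition polar (F : fieldType) (n : nat) (A : 'M[F]_n) (x y : 'rV[F]_n) : F :=
  qform A (x + y) - qform A x - qform A y.

Definition tsing (F : fieldType) (n : nat) (A : 'M[F]_n) (U : {vspace 'rV[F]_n}) :=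
  forall x, x \in U -> qform A x = 0.

(* The quadric restricted to the subspace V is non-degenerate (non-singular):
   no non-zero singular vector of V lies in the radical of the polar form on V.
   (Correct also in characteristic 2.) *)
Definition nondeg_on (F : fieldType) (n : nat) (A : 'M[F]_n) (V : {vspace 'rV[F]_n}) :=
  forall x, x \in V -> qform A x = 0 ->
    (forall y, y \in V -> polar A x y = 0) -> x = 0.

Definition witt_index_on (F : fieldType) (n : nat) (A : 'M[F]_n)
    (V : {vspace 'rV[F]_n}) (w : nat) :=
  (exists2 U : {vspace 'rV[F]_n}, (U <= V)%VS & tsing A U /\ \dim U = w) /\
  (forall U : {vspace 'rV[F]_n}, (U <= V)%VS -> tsing A U -> (\dim U <= w)%N).

(* The quadric in a subspace V of vector dimension m+1 (i.e. in PG(m,q)) is a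
   non-degenerate quadric Q_{m,e}: non-degenerate with generators of projective
   dimension (m-e-1)/2, i.e. Witt index (m+1-e)/2
   (e = 0 hyperbolic, e = 1 parabolic, e = 2 elliptic). *)
Definition is_Q_on (F : fieldType) (n : nat) (A : 'M[F]_n)
    (V : {vspace 'rV[F]_n}) (m e : nat) :=
  \dim V = m.+1 /\ nondeg_on A V /\ witt_index_on A V ((m.+1 - e) %/ 2).

Definition is_generator (F : fieldType) (n : nat) (A : 'M[F]_n)
    (U : {vspace 'rV[F]_n}) :=
  tsing A U /\
  forall U' : {vspace 'rV[F]_n}, tsing A U' -> (\dim U' <= \dim U)%N.

Definition is_spread (F : finFieldType) (n : nat) (A : 'M[F]_n) (m e : nat)
    (S : seq {vspace 'rV[F]_n}) :=
  [/\ uniq S,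
      size S = (#|F| ^ ((m + e - 1) %/ 2)).+1,
      (forall U, U \in S -> is_generator A U) &
      (forall U V, U \in S -> V \in S -> U != V -> (U :&: V = 0)%VS)].

(* Main.v *)
Require Import Defs.
From mathcomp Require Import all_boot all_order all_algebra.
From mathcomp Require Import all_field.
From mathcomp Require Import zify ring lra.
Set Implicit Arguments. Unset Strict Implicit. Unset Printing Implicit Defensive.
Import GRing.Theory.
Local Open Scope ring_scope.
Local Open Scope ring_scope.

Section Q.
Variables (F : finFieldType) (n : nat) (A : 'M[F]_n).
Definition bil (x y : 'rV[F]_n) : F := (x *m A *m y^T) ord0 ord0.
Lemma qformE x : qform A x = bil x x. Proof. by []. Qed.
Lemma bilDl x y z : bil (x + y) z = bil x z + bil y z.
Proof. by rewrite /bil !mulmxDl mxE. Qed.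
Lemma bilDr x y z : bil x (y + z) = bil x y + bil x z.
Proof. by rewrite /bil raddfD !mulmxDr mxE. Qed.
Lemma bilZl a x z : bil (a *: x) z = a * bil x z.
Proof. by rewrite /bil -!scalemxAl mxE. Qed.
Lemma bilZr a x z : bil x (a *: z) = a * bil x z.
Proof. by rewrite /bil linearZ /= -!scalemxAr mxE. Qed.
Lemma bilNl x z : bil (- x) z = - bil x z.
Proof. by rewrite -scaleN1r bilZl mulN1r. Qed.
Lemma bilNr x z : bil x (- z) = - bil x z.
Proof. by rewrite -scaleN1r bilZr mulN1r. Qed.
Lemma bil0l z : bil 0 z = 0. Proof. by rewrite -(scale0r 0) bilZl mul0r. Qed.
Lemma polarE x y : polar A x y = bil x y + bil y x.
Proof. rewrite /polar !qformE bilDl !bilDr. ring. Qed.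
Lemma polarC x y : polar A x y = polar A y x.
Proof. by rewrite !polarE addrC. Qed.
Lemma qformD x y : qform A (x + y) = qform A x + qform A y + polar A x y.
Proof. rewrite polarE !qformE bilDl !bilDr. ring. Qed.
Lemma qformZ a x : qform A (a *: x) = a ^+ 2 * qform A x.
Proof. rewrite !qformE bilZl bilZr. ring. Qed.
Lemma polarDr x y z : polar A x (y + z) = polar A x y + polar A x z.
Proof. rewrite !polarE bilDl bilDr. ring. Qed.
Lemma polarZr a x y : polar A x (a *: y) = a * polar A x y.
Proof. rewrite !polarE bilZl bilZr. ring. Qed.
Lemma polarNr x y : polar A x (- y) = - polar A x y.
Proof. rewrite !polarE bilNl bilNr. ring. Qed.
Lemma polarBr x y z : polar A x (y - z) = polar A x y - polar A x z.
Proof. by rewrite polarDr polarNr. Qed.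
Lemma polarDl x y z : polar A (y + z) x = polar A y x + polar A z x.
Proof. by rewrite polarC polarDr !(polarC x). Qed.
Lemma polarZl a x y : polar A (a *: y) x = a * polar A y x.
Proof. by rewrite polarC polarZr polarC. Qed.
Lemma polarBl x y z : polar A (y - z) x = polar A y x - polar A z x.
Proof. by rewrite polarC polarBr !(polarC x). Qed.
Lemma polarxx x : polar A x x = 2 * qform A x.
Proof. rewrite polarE qformE. ring. Qed.
End Q.

Local Open Scope ring_scope.

Section Q2.
Variables (F : finFieldType) (n : nat) (A : 'M[F]_n).

Lemma mx11_eq0 (M : 'M[F]_1) : (M == 0) = (M 0 0 == 0).
Proof.
apply/eqP/eqP => [->|h]; first by rewrite mxE.
by apply/matrixP => i j; rewrite !ord1 h mxE.
Qed.

Definition pcol (u : 'rV[F]_n) : 'cV[F]_n := (A + A^T) *m u^T.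

Lemma pcolE x u : (x *m pcol u) 0 0 = polar A x u.
Proof.
rewrite polarE /bil /pcol mulmxDl mulmxDr mxE mulmxA; congr (_ + _).
transitivity (((u *m A *m x^T)^T) 0 0); last by rewrite mxE.
by rewrite !trmx_mul trmxK mulmxA.
Qed.

Definition Wsp (V : {vspace 'rV[F]_n}) u v : {vspace 'rV[F]_n} :=
  (V :&: lker (linfun (mulmxr (pcol u))) :&: lker (linfun (mulmxr (pcol v))))%VS.

Lemma memW V u v x :
  (x \in Wsp V u v) = [&& x \in V, polar A x u == 0 & polar A x v == 0].
Proof.
by rewrite /Wsp !memv_cap !memv_ker !lfunE /= !mx11_eq0 !pcolE andbA.
Qed.
End Q2.

Local Open Scope ring_scope.

Section Dec.
Variables (F : finFieldType) (n : nat) (A : 'M[F]_n).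
Variables (V : {vspace 'rV[F]_n}) (u v : 'rV[F]_n).
Hypotheses (Vu : u \in V) (Vv : v \in V) (Qu : qform A u = 0) (Qv : qform A v = 0)
  (Puv : polar A u v = 1).

Let Pvu : polar A v u = 1. Proof. by rewrite polarC. Qed.
Let Puu : polar A u u = 0. Proof. by rewrite polarxx Qu mulr0. Qed.
Let Pvv : polar A v v = 0. Proof. by rewrite polarxx Qv mulr0. Qed.

Definition phi (p : F * F * 'rV[F]_n) := p.1.1 *: u + p.1.2 *: v + p.2.
Definition psi x := (polar A x v, polar A x u, x - polar A x v *: u - polar A x u *: v).

Lemma phiK x : phi (psi x) = x.
Proof.
rewrite /phi /psi /=.
set a := polar A x v; set b := polar A x u.
by rewrite -[x - _ - _]addrA -opprD addrC addNKr.
Qed.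

Lemma psiW x : x \in V -> (psi x).2 \in Wsp A V u v.
Proof.
move=> Vx; rewrite memW /psi /=.
rewrite !polarBl !polarZl Puu Pvu Pvv Puv !mulr0 !mulr1 !subr0.
rewrite polarC subrr [polar A v x]polarC subrr !eqxx !andbT.
by rewrite !rpredB ?rpredZ.
Qed.

Lemma phi_pred j : ((phi j \in V) && (psi (phi j) == j)) = (j.2 \in Wsp A V u v).
Proof.
case: j => [[a b] y] /=.
apply/idP/idP.
  case/andP=> Vp /eqP e.
  have := psiW Vp; by rewrite e.
rewrite memW => /and3P[Vy /eqP yu /eqP yv].
apply/andP; split; first by rewrite /phi /= !rpredD ?rpredZ.
rewrite /psi /phi /= !polarDl !polarZl Puu Pvu Pvv Puv yu yv.
rewrite !mulr0 !mulr1 !addr0 !add0r.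
apply/eqP; congr (_, _, _).
by rewrite -addrA -opprD (addrC (a *: u + b *: v) y) addrK.
Qed.

Lemma decomp (g : 'rV[F]_n -> nat) :
  (\sum_(x | x \in V) g x = \sum_(p : F * F) \sum_(y | y \in Wsp A V u v)
     g ((p.1 *: u + p.2 *: v + y)%R))%N.
Proof.
rewrite (reindex_onto phi psi) => [|x _]; last exact: phiK.
rewrite (eq_bigl _ _ phi_pred) pair_big /=.
by apply: eq_bigl => -[[a b] y].
Qed.
End Dec.

Local Open Scope ring_scope.

Lemma sum_prod (F : finFieldType) (c : F) :
  (\sum_(p : F * F) ((p.1 * p.2)%R == c) = #|F|.-1 + (c == 0%R) * #|F|)%N.
Proof.
rewrite -(pair_big xpredT xpredT (fun a b => ((a * b)%R == c) : nat)) /=.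
rewrite (bigD1 0) //= (eq_bigr (fun _ => (c == 0) : nat)); last first.
  by move=> b _; rewrite mul0r eq_sym.
rewrite sum_nat_const.
rewrite (eq_bigr (fun _ => 1%N)); last first.
  move=> a a0; rewrite (eq_bigr (fun b => (b == c / a) : nat)).
    by rewrite (bigD1 (c / a)) //= eqxx big1 // => i /negbTE ->.
  move=> b _; congr (nat_of_bool _).
  apply/eqP/eqP => [<-|->]; first by rewrite [a * b]mulrC mulfK.
  by rewrite mulrC divfK.
rewrite sum1dep_card.
have -> : [set x : F | x != 0] = [set~ (0:F)] by apply/setP => x; rewrite !inE.
rewrite cardsC1 (_ : #|xpredT| = #|F|); last by apply: eq_card.
by rewrite addnC mulnC.
Qed.

Section Count.
Variables (F : finFieldType) (n : nat) (A : 'M[F]_n).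

Definition sing (V : {vspace 'rV[F]_n}) := [set x | (x \in V) && (qform A x == 0)].

Lemma card_sing V : #|sing V| = (\sum_(x | x \in V) (qform A x == 0%R))%N.
Proof.
rewrite /sing -sum1dep_card big_mkcondr /=.
by apply: eq_bigr => x _; case: (_ == _).
Qed.

Variables (V : {vspace 'rV[F]_n}) (u v : 'rV[F]_n).
Hypotheses (Vu : u \in V) (Vv : v \in V) (Qu : qform A u = 0) (Qv : qform A v = 0)
  (Puv : polar A u v = 1).

Lemma qform_phi a b y : y \in Wsp A V u v ->
  qform A (a *: u + b *: v + y) = a * b + qform A y.
Proof.
rewrite memW => /and3P[_ /eqP yu /eqP yv].
rewrite !qformD !qformZ Qu Qv polarZl polarZr Puv polarDl !polarZl.
rewrite (polarC A u) (polarC A v) yu yv; ring.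
Qed.

Lemma card_V : #|V| = (#|F| * #|F| * #|Wsp A V u v|)%N.
Proof.
rewrite -sum1_card (decomp Vu Vv Qu Qv Puv (fun _ => 1%N)).
rewrite (eq_bigr (fun _ : F * F => #|Wsp A V u v|)); last by move=> p _; rewrite sum1_card.
by rewrite sum_nat_const card_prod mulnC.
Qed.

Lemma card_singV : #|sing V| =
  (#|F|.-1 * #|Wsp A V u v| + #|F| * #|sing (Wsp A V u v)|)%N.
Proof.
rewrite card_sing (decomp Vu Vv Qu Qv Puv).
rewrite (eq_bigr (fun p => \sum_(y | y \in Wsp A V u v)
     ((p.1 * p.2)%R == - qform A y) : nat)%N); last first.
  move=> p _; apply: eq_bigr => y Wy; by rewrite qform_phi // addr_eq0.
rewrite exchange_big /=.
rewrite (eq_bigr (fun y => #|F|.-1 + (qform A y == 0%R) * #|F|))%N; last first.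
  by move=> y _; rewrite sum_prod oppr_eq0.
rewrite big_split /= sum_nat_const -big_distrl /= -card_sing.
by rewrite mulnC (mulnC #|F|).
Qed.
End Count.

Local Open Scope ring_scope.

Fixpoint fb (q N w : nat) : nat :=
  match w with 0 => 1 | w'.+1 => q * fb q (N - 2) w' + (q - 1) * q ^ (N - 2) end%N.

Lemma fb_pos q N w : (0 < q)%N -> (0 < fb q N w)%N.
Proof.
move=> q0; elim: w N => [|w IH] N //=.
by rewrite ltn_addr // muln_gt0 q0 IH.
Qed.

Section Bound.
Variables (F : finFieldType) (n : nat) (A : 'M[F]_n).

Lemma tline (x : 'rV[F]_n) : qform A x = 0 -> tsing A <[x]>%VS.
Proof. by move=> Qx z /vlineP[k ->]; rewrite qformZ Qx mulr0. Qed.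

Lemma sing_bound w : forall V : {vspace 'rV[F]_n}, nondeg_on A V ->
  (forall U, (U <= V)%VS -> tsing A U -> (\dim U <= w)%N) ->
  (#|sing A V| <= fb #|F| (\dim V) w)%N.
Proof.
have q1 := card_finNzRing_gt1 F.
have q0 : (0 < #|F|)%N by apply: ltnW.
have le1 V : (forall x, x \in sing A V -> x = 0) -> (#|sing A V| <= 1)%N.
  move=> h; apply: (@leq_trans #|[set (0 : 'rV[F]_n)]|); last by rewrite cards1.
  apply: subset_leq_card.
  by apply/subsetP => x /h ->; rewrite inE.
elim: w => [|w IH] V nd hw.
  apply: le1 => x; rewrite inE => /andP[Vx /eqP Qx]; apply/eqP/negPn/negP => x0.
  by have := hw _ Vx (tline Qx); rewrite dim_vline x0.
case: (pickP [pred x | (x \in sing A V) && (x != 0)]) => [u /andP[] | none]; last first.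
  apply: (@leq_trans 1%N); last exact: fb_pos.
  apply: le1 => x Sx; apply/eqP/negPn/negP => x0.
  by have := none x; rewrite /= Sx x0.
rewrite inE => /andP[Vu /eqP Qu] u0.
have [y Vy Py] : exists2 y, y \in V & polar A u y != 0.
  case: (pickP [pred y | (y \in V) && (polar A u y != 0)]) => [y /andP[]|none]; first by exists y.
  case/eqP: u0; apply: nd => // y Vy; apply/eqP/negPn/negP => Py.
  by have := none y; rewrite /= Vy Py.
pose y' := (polar A u y)^-1 *: y.
have Py' : polar A u y' = 1 by rewrite polarZr mulVf.
have Vy' : y' \in V by rewrite rpredZ.
clearbody y'.
pose v := y' + (- qform A y') *: u.
have Vv : v \in V by rewrite rpredD ?rpredZ.
have Puu : polar A u u = 0 by rewrite polarxx Qu mulr0.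
have Puv : polar A u v = 1.
  by rewrite /v polarDr Py' polarZr Puu mulr0 addr0.
have Qv : qform A v = 0.
  by rewrite /v qformD qformZ Qu polarZr (polarC A y') Py'; ring.
clearbody v.
set W := Wsp A V u v.
have WV : (W <= V)%VS by apply: subv_trans (capvSl _ _) (capvSl _ _).
have ndW : nondeg_on A W.
  move=> x Wx Qx hx; apply: nd => //; first exact: (subvP WV).
  move=> z Vz.
  rewrite -(phiK A u v z) /phi.
  have Wt : (psi A u v z).2 \in W by apply: psiW.
  move: Wt; set t := (psi A u v z).2; clearbody t => Wt.
  move: (Wx); rewrite memW => /and3P[_ /eqP xu /eqP xv].
  by rewrite !polarDr !polarZr xu xv (hx _ Wt) !mulr0 !addr0.
have hwW : forall U, (U <= W)%VS -> tsing A U -> (\dim U <= w)%N.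
  move=> U UW tU.
  have cap0 : \dim (U :&: <[u]>) = 0%N.
    apply/eqP; rewrite dimv_eq0 -subv0; apply/subvP => x.
    rewrite memv_cap memv0 => /andP[xU /vlineP[k xk]].
    have : x \in W by apply: (subvP UW).
    rewrite memW xk => /and3P[_ _ /eqP]; rewrite polarZl Puv mulr1 => k0.
    by rewrite k0 scale0r.
  have : (\dim (U + <[u]>) <= w.+1)%N.
    apply: hw.
      by rewrite subv_add (subv_trans UW WV).
    move=> x /memv_addP[y1 Uy1 [z /vlineP[k ->] ->]].
    have : y1 \in W by apply: (subvP UW).
    rewrite memW => /and3P[_ /eqP y1u _].
    by rewrite qformD qformZ Qu polarZr y1u tU // mulr0 mulr0 !addr0.
  have := dimv_sum_cap U <[u]>; rewrite cap0 dim_vline u0 addn0 => ->.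
  by rewrite addn1.
have IHW := IH W ndW hwW.
have cV := card_V Vu Vv Qu Qv Puv.
rewrite !card_vspace in cV.
have dV : \dim V = (\dim W).+2.
  by apply/eqP; rewrite -(eqn_exp2l _ _ q1) cV !expnS mulnA.
rewrite (card_singV Vu Vv Qu Qv Puv) -/W dV /= subn2 /= card_vspace -subn1.
by rewrite addnC leq_add2r leq_mul2l IHW orbT.
Qed.
End Bound.

Local Open Scope ring_scope.

Local Open Scope nat_scope.
Lemma fb_closed q m w : (0 < q)%N ->
  (q * fb q (m + 2 * w) w + q ^ (m + w) = q ^ w.+1 + q ^ (m + 2 * w))%N.
Proof.
move=> q0; elim: w m => [|w IH] m.
  by rewrite /= muln0 !addn0 muln1 expn1.
have -> : (m + 2 * w.+1 = (m + 2 * w).+2)%N by lia.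
rewrite /= subn2 /=.
have := IH m.
rewrite (_ : (m + w.+1 = (m + w).+1)%N) ?addnS // !expnS.
set X := fb _ _ _; set P := q ^ (m + w); set R := q ^ (m + 2 * w); set T := q ^ w.
move=> E.
have -> : (q * (q * X + (q - 1) * R) + q * P = q * (q * X + P) + q * (q - 1) * R)%N by ring.
rewrite E.
have -> : (q - 1 = q.-1)%N by lia.
rewrite -(prednK q0) /=. ring.
Qed.

Lemma sum_if (T : Type) (P : pred T) (S : seq T) (a b : nat) :
  (\sum_(U <- S) (if P U then a else b) = count P S * a + count (predC P) S * b)%N.
Proof.
elim: S => [|U S IH]; first by rewrite big_nil.
rewrite big_cons IH /=; case: (P U) => /=; ring.
Qed.

Local Open Scope ring_scope.
Section Cover.
Variables (F : finFieldType) (n : nat) (A : 'M[F]_n) (K : {vspace 'rV[F]_n}).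

Definition Cs (S : seq {vspace 'rV[F]_n}) :=
  foldr (fun U acc => [set x | x \in (U :&: K)%VS] :|: acc) [set 0 : 'rV[F]_n] S.

Lemma memC S x : x \in Cs S -> (x == 0) || has (fun U => x \in (U :&: K)%VS) S.
Proof.
elim: S => [|U S IH] /=; first by rewrite inE => ->.
rewrite !inE => /orP[->|/IH]; first by rewrite orbT.
by case/orP=> ->; rewrite ?orbT.
Qed.

Lemma coverL (S : seq {vspace 'rV[F]_n}) : uniq S ->
  (forall U, U \in S -> tsing A U) ->
  (forall U V, U \in S -> V \in S -> U != V -> (U :&: V = 0)%VS) ->
  (\sum_(U <- S) #|(U :&: K)%VS| + 1 <= #|sing A K| + size S)%N.
Proof.
move=> uS tS dS.
have CK : Cs S \subset sing A K.
  apply/subsetP => x /memC; rewrite !inE => /orP[/eqP ->|].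
    by rewrite mem0v /= (qformE) /bil mul0mx mul0mx mxE.
  case/hasP => U US'; rewrite memv_cap => /andP[xU xK].
  by rewrite xK (tS U US' x xU) eqxx.
suff : (\sum_(U <- S) #|(U :&: K)%VS| + 1 <= #|Cs S| + size S)%N.
  move=> h; apply: leq_trans h _; rewrite leq_add2r; exact: subset_leq_card.
clear CK.
elim: S uS tS dS => [|U S IH] uS tS dS.
  by rewrite big_nil /= cards1.
move: uS => /= /andP[US uS].
have tS' : forall V, V \in S -> tsing A V by move=> V VS; apply: tS; rewrite inE VS orbT.
have dS' : forall V W, V \in S -> W \in S -> V != W -> (V :&: W = 0)%VS.
  by move=> V W VS WS; apply: dS; rewrite inE ?VS ?WS orbT.
have := IH uS tS' dS'.
set UK := [set x | x \in (U :&: K)%VS].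
have iC : UK :&: Cs S = [set 0].
  apply/setP => x; rewrite !inE.
  apply/idP/idP => [/andP[xUK /memC /orP[//|/hasP[V VS]]]|/eqP ->].
    rewrite memv_cap => /andP[xV _].
    move: xUK; rewrite memv_cap => /andP[xU _].
    have UV : U != V by apply: contraNneq US => ->.
    have VS' : V \in U :: S by rewrite inE VS orbT.
    have := dS U V (mem_head _ _) VS' UV.
    by move=> e; have := memv_cap x U V; rewrite e memv0 xU xV.
  rewrite mem0v /=.
  by elim: (S) => [|V S' IHS] /=; rewrite !inE ?mem0v ?eqxx ?orbT.
have cU := cardsUI UK (Cs S); rewrite iC cards1 in cU.
rewrite big_cons /= -(cardsE (mem (U :&: K)%VS)) -/UK.
move=> h; move: cU h.
set a := #|UK|; set b := #|UK :|: Cs S|; set c := #|Cs S|.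
set d := \sum_(_ <- S) _.
move=> cU h.
rewrite -addnA (addnC a) -/d.
lia.
Qed.
End Cover.

Local Open Scope nat_scope.
Lemma arith1 q a k k' Sig s X : 1 < q -> 0 < a ->
 k*(q*a) + k'*a <= Sig -> Sig + 1 <= s + (q*a).+1 -> s <= X -> k + k' = (q*a).+1 ->
 q*X + q*a = q*(q*a) + q*q*(a*a) -> k <= q.+1.
Proof.
move=> q1 a0 h1 h2 h3 h4 h5.
have hX : X + a = q * a + q * (a * a).
  apply/eqP; rewrite -(eqn_pmul2l (ltnW q1)); apply/eqP; rewrite !mulnDr h5; lia.
have h6 : k * (q * a) + k' * a <= X + q * a by lia.
have h7 : (k + k') * a = q * (a * a) + a by rewrite h4 mulSn mulnA addnC.
have [p qp] : exists p, q = p.+1 by exists q.-1; lia.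
subst q.
have h8 : k * (p.+1 * a) + k' * a = k * p * a + (k + k') * a by ring.
have h9 : (k * p + 2) * a <= (2 * p.+1) * a.
  rewrite mulnDl; lia.
rewrite leq_pmul2r // in h9.
nia.
Qed.
Lemma arith2 q a k k' Sig s X : 1 < q -> 0 < a ->
 k*(q*a) + k'*a <= Sig -> Sig + 1 <= s + (q*(q*a)).+1 -> s <= X ->
 k + k' = (q*(q*a)).+1 ->
 q*X + q*(q*a) = q*(q*a) + q*(q*(q*(a*a))) -> k <= q.+1.
Proof.
move=> q1 a0 h1 h2 h3 h4 h5.
have hX : X = q * (q * (a * a)).
  apply/eqP; rewrite -(eqn_pmul2l (ltnW q1)); apply/eqP; lia.
have h7 : (k + k') * a = q * (q * (a * a)) + a by rewrite h4 mulSn !mulnA addnC.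
have [p qp] : exists p, q = p.+1 by exists q.-1; lia.
subst q.
have h8 : k * (p.+1 * a) + k' * a = k * p * a + (k + k') * a by ring.
have h9 : (k * p + 1) * a <= (p.+1 * p.+1) * a.
  rewrite mulnDl.
  have : p.+1 * (p.+1 * a) = p.+1 * p.+1 * a by ring.
  lia.
rewrite leq_pmul2r // in h9.
nia.
Qed.

Local Open Scope ring_scope.
Local Open Scope ring_scope.

Theorem mainTheorem4 (F : finFieldType) (e r : nat)
    (he : (e = 1%N /\ ~~ odd r) \/ (e = 2%N /\ odd r))
    (A : 'M[F]_(r.+3))
    (hQ : is_Q_on A fullv r.+2 e)
    (S : seq {vspace 'rV[F]_(r.+3)})
    (hS : is_spread A r.+2 e S)
    (K : {vspace 'rV[F]_(r.+3)})
    (hK : is_Q_on A K r.+1 e.-1) :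
  (count (fun U => (U <= K)%VS) S <= #|F|.+1)%N.
Proof.
have q1 : (1 < #|F|)%N := card_finNzRing_gt1 F.
set q := #|F| in q1 *.
have q0 : (0 < q)%N by apply: ltnW.
case: hQ => _ [_ [[U0 _ [tU0 dU0]] hw]].
case: hK => dK [ndK [_ hwK]].
case: hS => uS sS gS dS.
set w := (((r.+2).+1 - e) %/ 2)%N in dU0 hw.
have dimS : forall U, U \in S -> \dim U = w.
  move=> U US; case: (gS U US) => tU mU.
  by apply/eqP; rewrite eqn_leq hw ?subvf // -dU0 mU.
have tS : forall U, U \in S -> tsing A U by move=> U /gS[].
have cov := @coverL _ _ A K S uS tS dS.
have sb := sing_bound ndK hwK.
rewrite dK in sb.
set P := fun U : {vspace 'rV[F]_(r.+3)} => (U <= K)%VS.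
have lb : (count P S * q ^ w + count (predC P) S * q ^ w.-1 <=
            \sum_(U <- S) #|(U :&: K)%VS|)%N.
  rewrite -sum_if big_seq [X in (_ <= X)%N]big_seq; apply: leq_sum => U US.
  rewrite card_vspace -/q.
  case: ifP => UK.
    by rewrite (capv_idPl UK) dimS.
  rewrite leq_exp2l //.
  have := dimv_sum_cap U K; rewrite (dimS U US) dK.
  have : (\dim (U + K) <= r.+3)%N.
    by have := dimvS (subvf (U + K)%VS); rewrite dimvf /dim /= mul1n.
  move: (\dim (U + K)) (\dim (U :&: K)) => x y; clear -x y; lia.
have cnt := count_predC P S.
rewrite sS in cnt cov.
move: lb cov sb cnt; rewrite /w.
set k := count P S; set k' := count _ S; set Sig := \sum_(_ <- _) _.
set s := #|sing A K|.
have a0 : (0 < q ^ r./2)%N by rewrite expn_gt0 q0.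
case: he => [[-> ev]|[-> od]].
  have rm : r = (r./2).*2 by rewrite -{1}(odd_double_half r) (negbTE ev).
  set m := r./2 in rm a0.
  rewrite (_ : ((r.+2).+1 - 1) %/ 2 = m.+1)%N; last by lia.
  rewrite (_ : ((r.+2 + 1 - 1) %/ 2) = m.+1)%N; last by lia.
  move=> lb cov sb cnt.
  rewrite -/q in cov; rewrite -/q in cnt sb.
  have fc := fb_closed 0 m.+1 q0.
  rewrite (_ : (0 + 2 * m.+1 = r.+2)%N) in fc; last by lia.
  have ex : (q ^ r.+2 = q * q * (q ^ m * q ^ m))%N.
    by rewrite rm -addnn !expnS expnD; ring.
  rewrite ex add0n !expnS in fc.
  rewrite !expnS /= in cnt lb cov.
  exact: (@arith1 _ _ _ _ _ _ _ q1 a0 lb cov sb cnt fc).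
have rm : r = (r./2).*2.+1 by rewrite -{1}(odd_double_half r) od.
set m := r./2 in rm a0.
rewrite (_ : ((r.+2).+1 - 2) %/ 2 = m.+1)%N; last by lia.
rewrite (_ : ((r.+2 + 2 - 1) %/ 2) = m.+2)%N; last by lia.
move=> lb cov sb cnt.
rewrite -/q in cov; rewrite -/q in cnt sb.
have fc := fb_closed 1 m.+1 q0.
rewrite (_ : (1 + 2 * m.+1 = r.+2)%N) in fc; last by lia.
have ex : (q ^ r.+2 = q * (q * (q * (q ^ m * q ^ m))))%N.
  by rewrite rm -addnn !expnS expnD; ring.
rewrite ex add1n !expnS in fc.
rewrite !expnS /= in cnt lb cov.
exact: (@arith2 _ _ _ _ _ _ _ q1 a0 lb cov sb cnt fc).
Qed.
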